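(* Let $(\rho,\sigma)\in\mathfrak V$ with $\sigma\le0$ and $\rho\mid l$, and let $\lambda\in K$. Let $\varphi$ be the automorphism of $W^{(l)}$ with $\varphi(X^{1/l})=X^{1/l}$ and $\varphi(Y)=Y+\lambda X^{\sigma/\rho}$, and let $\varphi_L$ be the automorphism of $L^{(l)}$ with $\varphi_L(x^{1/l})=x^{1/l}$, $\varphi_L(y)=y+\lambda x^{\sigma/\rho}$. Then for all $P\in W^{(l)}\setminus\{0\}$: $\ell_{\rho,\sigma}(\varphi(P))=\varphi_L(\ell_{\rho,\sigma}(P))$ and $v_{\rho,\sigma}(\varphi(P))=v_{\rho,\sigma}(P)$. Furthermore, $\ell_{\rho_1,\sigma_1}(\varphi(P))=\ell_{\rho_1,\sigma_1}(P)$ for all $(\rho_1,\sigma_1)\in\mathfrak V$ with $(\rho,\sigma)<(\rho_1,\sigma_1)<(-1,1)$.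
   Context: $K$ is a field of characteristic zero, $l\in\mathbb{N}$. $W^{(l)}$ is the associative $K$-algebra with $K$-basis $\{X^{i/l}Y^j:i\in\mathbb{Z},j\in\mathbb{N}_0\}$, powers of $X$ multiplying as Laurent monomials and $[Y,X^\alpha]=\alpha X^{\alpha-1}$ for $\alpha\in\frac1l\mathbb{Z}$. $L^{(l)}=K[x^{\pm1/l},y]$, $\Psi^{(l)}(X^{i/l}Y^j)=x^{i/l}y^j$ ($K$-linear); supports are sets of exponents with nonzero coefficient. $\mathfrak V=\{(\rho,\sigma)\in\mathbb{Z}^2:\gcd(\rho,\sigma)=1,\rho+\sigma>0\}$. For $P\ne0$, $v_{\rho,\sigma}(P)=\max\{\rho a+\sigma b:(a,b)\in\mathrm{Supp}(P)\}$, $\ell_{\rho,\sigma}(P)\in L^{(l)}$ = sum of terms of $\Psi^{(l)}(P)$ attaining it. Order: $(\rho,\sigma)<(-1,1)$ for all $(\rho,\sigma)\in\mathfrak V$, and on $\mathfrak V$, $(\rho_1,\sigma_1)\le(\rho,\sigma)$ iff $\rho_1\sigma-\sigma_1\rho\ge0$. *)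

(* Defs.v *)
From HB Require Import structures.
From mathcomp Require Import all_boot all_order all_algebra.
From mathcomp Require Import finmap.
From mathcomp Require Import monalg.
Set Implicit Arguments. Unset Strict Implicit. Unset Printing Implicit Defensive.
Import Order.TTheory GRing.Theory Num.Theory.
Local Open Scope ring_scope.

(* An element of W^(l) (resp. L^(l)) is a finitely supported map
   (i, j) : int * nat |-> coefficient of X^(i/l) Y^j (resp. x^(i/l) y^j).
   Both algebras share the underlying K-vector space; Psi^(l) is the identity
   on coefficients. *)
Notation Wpoly K := {malg K[(int * nat)%type]}.

Section Defs.
Variable K : fieldType.

Definition mon (i : int) (j : nat) : Wpoly K := << ((i, j) : int * nat) >>.

Definition ffact (alpha : K) (k : nat) : K := \prod_(m < k) (alpha - m%:R).

(* Product of basis monomials in W^(l), from [Y, X^alpha] = alpha X^(alpha-1):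
   X^(a/l) Y^b * X^(c/l) Y^d
     = sum_k C(b,k) (c/l)_k X^((a+c)/l - k) Y^(b+d-k). *)
Definition Wmonmul (l : nat) (u v : int * nat) : Wpoly K :=
  \sum_(k < u.2.+1)
     ('C(u.2, k)%:R * ffact (v.1%:~R / l%:R) k) *:
       mon (u.1 + v.1 - (k * l)%:Z) ((u.2 + v.2) - k)%N.

Definition Wmul (l : nat) (P Q : Wpoly K) : Wpoly K :=
  \sum_(u <- msupp P) \sum_(v <- msupp Q) (P@_u * Q@_v) *: Wmonmul l u v.

Definition Lmul (P Q : Wpoly K) : Wpoly K :=
  \sum_(u <- msupp P) \sum_(v <- msupp Q)
     (P@_u * Q@_v) *: mon (u.1 + v.1) (u.2 + v.2)%N.

Definition weight (l : nat) (rho sigma : int) (u : int * nat) : rat :=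
  rho%:~R * (u.1%:~R / l%:R) + sigma%:~R * u.2%:R.

Definition vdeg (l : nat) (rho sigma : int) (P : Wpoly K) : rat :=
  let s := enum_fset (msupp P) in
  foldr Num.max (weight l rho sigma (head (0%:Z, 0%N) s))
        [seq weight l rho sigma u | u <- s].

(* ell_{rho,sigma}(P) in L^(l): the terms of Psi(P) attaining v_{rho,sigma}(P). *)
Definition lead (l : nat) (rho sigma : int) (P : Wpoly K) : Wpoly K :=
  \sum_(u <- msupp P | weight l rho sigma u == vdeg l rho sigma P) << P@_u *g u >>.

End Defs.

Definition inV (rho sigma : int) : bool :=
  (gcdz rho sigma == 1) && (0 < rho + sigma).

Definition leV (r1 s1 r s : int) : bool := 0 <= r1 * s - s1 * r.
Definition ltV (r1 s1 r s : int) : bool :=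
  leV r1 s1 r s && ((r1, s1) != (r, s)).

(* Main.v *)
Require Import Defs.
From HB Require Import structures.
From mathcomp Require Import all_boot all_order all_algebra.
From mathcomp Require Import finmap.
From mathcomp Require Import monalg.
From mathcomp Require Import ring lra.
Set Implicit Arguments. Unset Strict Implicit. Unset Printing Implicit Defensive.
Import Order.TTheory GRing.Theory Num.Theory.
Local Open Scope ring_scope.
Local Notation I := (int * nat)%type.


Section Lin.
Variable K : fieldType.
Local Notation A := (Wpoly K).

Definition lsum (g : I -> A) (P : A) : A := \sum_(u <- msupp P) P@_u *: g u.

Lemma lsumEw g P (d : {fset I}) : (msupp P `<=` d)%fset ->
  lsum g P = \sum_(u <- d) P@_u *: g u.
Proof.
move=> le; rewrite /lsum (big_fset_incl _ le) // => x _ /mcoeff_outdom ->.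
by rewrite scale0r.
Qed.

Lemma lsum_lin g c P Q : lsum g (c *: P + Q) = c *: lsum g P + lsum g Q.
Proof.
pose d := (msupp P `|` msupp Q `|` msupp (c *: P + Q))%fset.
rewrite (@lsumEw g (c *: P + Q) d) ?fsubsetUr //.
rewrite (@lsumEw g P d); last by apply/fsubsetP => x hx; rewrite /d !inE hx.
rewrite (@lsumEw g Q d); last by apply/fsubsetP => x hx; rewrite /d !inE hx !orbT.
rewrite scaler_sumr -big_split; apply: eq_bigr => u _.
rewrite [(_ + _)@__]mcoeffD mcoeffZ scalerDl -scalerA; reflexivity.
Qed.

Lemma lsumD g P Q : lsum g (P + Q) = lsum g P + lsum g Q.
Proof. by have := lsum_lin g 1 P Q; rewrite !scale1r. Qed.

Lemma lsum0 g : lsum g 0 = 0.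
Proof. by rewrite /lsum msupp0 big_nil. Qed.

Lemma lsumZ g c P : lsum g (c *: P) = c *: lsum g P.
Proof. by have := lsum_lin g c P 0; rewrite !addr0 lsum0 addr0. Qed.

Lemma lsumB g P Q : lsum g (P - Q) = lsum g P - lsum g Q.
Proof. by have := lsum_lin g (-1) Q P; rewrite !scaleN1r addrC => ->; rewrite addrC. Qed.


Definition allin (Q : pred I) (P : A) := forall x, x \in msupp P -> Q x.

Lemma allin0 (Q : pred I) : allin Q 0.
Proof. by move=> x; rewrite msupp0 inE. Qed.

Lemma allinD (Q : pred I) P1 P2 : allin Q P1 -> allin Q P2 -> allin Q (P1 + P2).
Proof.
by move=> h1 h2 x /(fsubsetP (msuppD_le _ _)); rewrite inE => /orP[/h1|/h2].
Qed.

Lemma allinB (Q : pred I) P1 P2 : allin Q P1 -> allin Q P2 -> allin Q (P1 - P2).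
Proof.
by move=> h1 h2 x /(fsubsetP (msuppB_le _ _)); rewrite inE => /orP[/h1|/h2].
Qed.

Lemma allinZ (Q : pred I) c P : allin Q P -> allin Q (c *: P).
Proof. by move=> h x /(fsubsetP (msuppZ_le _ _)) /h. Qed.

Lemma allin_sum (J : Type) (r : seq J) (Pj : pred J) (F : J -> A) Q :
  (forall j, Pj j -> allin Q (F j)) -> allin Q (\sum_(j <- r | Pj j) F j).
Proof.
move=> h; elim/big_rec: _ => [|j y Pjj hy]; first exact: allin0.
by apply: allinD => //; apply: h.
Qed.

Lemma allin_mon (Q : pred I) (i : int) (j : nat) : Q (i, j) -> allin Q (mon K i j).
Proof.
by move=> hu x; rewrite /mon msuppU oner_eq0 inE => /eqP ->.
Qed.

Lemma allin_imp (Q Q' : pred I) P : (forall x, Q x -> Q' x) -> allin Q P -> allin Q' P.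
Proof. by move=> h hP x /hP /h. Qed.

Variable l : nat.

Lemma allin_Wmul (Q : pred I) P1 P2 :
  (forall (u v : I) (k : nat), u \in msupp P1 -> v \in msupp P2 -> (k <= u.2)%N ->
      Q (u.1 + v.1 - (k * l)%:Z, (u.2 + v.2 - k)%N)) ->
  allin Q (Wmul l P1 P2).
Proof.
move=> h; rewrite /Wmul big_seq; apply: allin_sum => u hu.
rewrite big_seq; apply: allin_sum => v hv; apply: allinZ.
rewrite /Wmonmul; apply: allin_sum => k _; apply: allinZ; apply: allin_mon.
by apply: h => //; rewrite -ltnS.
Qed.

Lemma allin_Lmul (Q : pred I) P1 P2 :
  (forall (u v : I), u \in msupp P1 -> v \in msupp P2 ->
      Q (u.1 + v.1, (u.2 + v.2)%N)) ->
  allin Q (Lmul P1 P2).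
Proof.
move=> h; rewrite /Lmul big_seq; apply: allin_sum => u hu.
rewrite big_seq; apply: allin_sum => v hv; apply: allinZ.
by apply: allin_mon; apply: h.
Qed.

Lemma Wmonmul_split (u v : I) :
  Wmonmul K l u v = mon K (u.1 + v.1) (u.2 + v.2)%N +
    \sum_(k < u.2) ('C(u.2, k.+1)%:R * ffact (v.1%:~R / l%:R) k.+1) *:
       mon K (u.1 + v.1 - (k.+1 * l)%:Z) ((u.2 + v.2) - k.+1)%N.
Proof.
rewrite /Wmonmul big_ord_recl /= bin0 /ffact big_ord0 mulr1 scale1r.
by rewrite mul0n subr0 subn0.
Qed.

Lemma allin_WmulL (Q : pred I) P1 P2 :
  (forall (u v : I) (k : nat), u \in msupp P1 -> v \in msupp P2 ->
      (0 < k)%N -> (k <= u.2)%N ->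
      Q (u.1 + v.1 - (k * l)%:Z, (u.2 + v.2 - k)%N)) ->
  allin Q (Wmul l P1 P2 - Lmul P1 P2).
Proof.
move=> h; rewrite /Wmul /Lmul -sumrB big_seq; apply: allin_sum => u hu.
rewrite -sumrB big_seq; apply: allin_sum => v hv; rewrite -scalerBr; apply: allinZ.
rewrite Wmonmul_split addrAC subrr add0r; apply: allin_sum => k _; apply: allinZ.
by apply: allin_mon; apply: h.
Qed.



Lemma msupp_mon a b : msupp (mon K a b) = [fset ((a, b) : I)]%fset.
Proof. by rewrite /mon msuppU oner_eq0. Qed.

Lemma mcoeff_mon a b x : (mon K a b)@_x = (((a, b) : I) == x)%:R.
Proof. by rewrite /mon mcoeffU. Qed.

Lemma Wmul_mon a b c d :
  Wmul l (mon K a b) (mon K c d) = Wmonmul K l (a, b) (c, d).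
Proof.
rewrite /Wmul !msupp_mon !big_seq_fset1 !mcoeff_mon !eqxx mulr1 scale1r.
by [].
Qed.

Lemma Lmul_mon a b c d :
  Lmul (mon K a b) (mon K c d) = mon K (a + c) (b + d)%N.
Proof.
by rewrite /Lmul !msupp_mon !big_seq_fset1 !mcoeff_mon !eqxx mulr1 scale1r.
Qed.

Lemma Wmonmul_b0 a (v : I) : Wmonmul K l (a, 0%N) v = mon K (a + v.1) v.2.
Proof. by rewrite Wmonmul_split big_ord0 addr0. Qed.

Lemma Wmonmul_Y a b : Wmonmul K l (a, b) (0, 1%N) = mon K a b.+1.
Proof.
rewrite Wmonmul_split big1 ?addr0 ?addr0 ?addn1 //= => k _.
by rewrite /ffact big_ord_recl /= subr0 mul0r mul0r mulr0 scale0r.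
Qed.

Lemma Wmul_X Q : Wmul l (mon K 1 0) Q = Lmul (mon K 1 0) Q.
Proof.
rewrite /Wmul /Lmul !msupp_mon !big_seq_fset1; apply: eq_bigr => v _.
by rewrite Wmonmul_b0.
Qed.

Lemma Lmul_X_coef Q (x : I) : (Lmul (mon K 1 0) Q)@_(x.1 + 1, x.2) = Q@_x.
Proof.
rewrite [in RHS](monalgE Q) /Lmul msupp_mon big_seq_fset1 !raddf_sum /=.
apply: eq_bigr => -[v1 v2] _; rewrite mcoeffZ mcoeff_mon mcoeffU mul1r.
case: x => x1 x2 /=; rewrite xpair_eqE add0n [1 + _]addrC (inj_eq (addIr _)).
by rewrite mcoeffU -xpair_eqE mulr_natr.
Qed.

Lemma Lmul_X_inj Q1 Q2 : Lmul (mon K 1 0) Q1 = Lmul (mon K 1 0) Q2 -> Q1 = Q2.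
Proof.
by move=> h; apply/malgP => x; rewrite -Lmul_X_coef h Lmul_X_coef.
Qed.

End Lin.

Section W.
Variables (l : nat) (r s : int).
Hypothesis hl : (0 < l)%N.

Lemma weight_shift (u v : I) (k : nat) : (k <= u.2 + v.2)%N ->
  weight l r s (u.1 + v.1 - (k * l)%:Z, (u.2 + v.2 - k)%N) =
  weight l r s u + weight l r s v - k%:R * (r + s)%:~R.
Proof.
move=> hk; rewrite /weight /= intrB intrD -pmulrn natrB // natrD natrM intrD.
have l0 : (l%:R : rat) != 0 by rewrite pnatr_eq0 -lt0n.
by field.
Qed.

Lemma weight_add a b c d :
  weight l r s (a + c, (b + d)%N) = weight l r s (a, b) + weight l r s (c, d).
Proof. by rewrite /weight /= intrD natrD mulrDl; ring. Qed.

Hypothesis hrs : 0 < r + s.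
Variable K : fieldType.
Local Notation A := (Wpoly K).
Local Notation w := (weight l r s).

Definition bnd c : pred I := fun x => w x <= c.
Definition sbnd c : pred I := fun x => w x < c.
Definition hom c : pred I := fun x => w x == c.

Lemma rs_ge0 (k : nat) : 0 <= k%:R * (r + s)%:~R :> rat.
Proof. by rewrite mulr_ge0 // ler0z ltW. Qed.

Lemma rs_gt0 (k : nat) : (0 < k)%N -> 0 < k%:R * (r + s)%:~R :> rat.
Proof. by move=> hk; rewrite mulr_gt0 // ?ltr0n // ltr0z. Qed.

Lemma W_bnd c d (P Q : A) : allin (bnd c) P -> allin (bnd d) Q ->
  allin (bnd (c + d)) (Wmul l P Q).
Proof.
move=> hP hQ; apply: allin_Wmul => u v k hu hv hk.
rewrite /bnd weight_shift; last by rewrite (leq_trans hk) ?leq_addr.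
have := hP _ hu; have := hQ _ hv; have := rs_ge0 k; rewrite /bnd.
set a := w u; set b := w v; set e := _ * _; lra.
Qed.

Lemma W_sbndl c d (P Q : A) : allin (sbnd c) P -> allin (bnd d) Q ->
  allin (sbnd (c + d)) (Wmul l P Q).
Proof.
move=> hP hQ; apply: allin_Wmul => u v k hu hv hk.
rewrite /sbnd weight_shift; last by rewrite (leq_trans hk) ?leq_addr.
have := hP _ hu; have := hQ _ hv; have := rs_ge0 k; rewrite /bnd /sbnd.
set a := w u; set b := w v; set e := _ * _; lra.
Qed.

Lemma W_sbndr c d (P Q : A) : allin (bnd c) P -> allin (sbnd d) Q ->
  allin (sbnd (c + d)) (Wmul l P Q).
Proof.
move=> hP hQ; apply: allin_Wmul => u v k hu hv hk.
rewrite /sbnd weight_shift; last by rewrite (leq_trans hk) ?leq_addr.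
have := hP _ hu; have := hQ _ hv; have := rs_ge0 k; rewrite /bnd /sbnd.
set a := w u; set b := w v; set e := _ * _; lra.
Qed.

Lemma WL_sbnd c d (P Q : A) : allin (bnd c) P -> allin (bnd d) Q ->
  allin (sbnd (c + d)) (Wmul l P Q - Lmul P Q).
Proof.
move=> hP hQ; apply: allin_WmulL => u v k hu hv hk0 hk.
rewrite /sbnd weight_shift; last by rewrite (leq_trans hk) ?leq_addr.
have := hP _ hu; have := hQ _ hv; have := rs_gt0 hk0; rewrite /bnd /sbnd.
set a := w u; set b := w v; set e := _ * _; lra.
Qed.

Lemma L_hom c d (P Q : A) : allin (hom c) P -> allin (hom d) Q ->
  allin (hom (c + d)) (Lmul P Q).
Proof.
move=> hP hQ; apply: allin_Lmul => -[a b] [c' d'] hu hv.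
rewrite /hom weight_add.
by move: (hP _ hu) (hQ _ hv); rewrite /hom => /eqP -> /eqP ->.
Qed.

End W.

Lemma foldr_max_ge (x0 x : rat) (t : seq rat) : x \in t -> x <= foldr Num.max x0 t.
Proof.
elim: t => //= a t IH; rewrite inE => /orP[/eqP ->|/IH h].
  by rewrite le_max lexx.
by rewrite le_max h orbT.
Qed.

Lemma foldr_max_mem (x0 : rat) (t : seq rat) :
  foldr Num.max x0 t = x0 \/ foldr Num.max x0 t \in t.
Proof.
elim: t => [|a t IH] /=; first by left.
rewrite maxEle; case: ifP => _; last by right; rewrite mem_head.
by case: IH => [->|h]; [left | right; rewrite inE h orbT].
Qed.

Section Lead.
Variable K : fieldType.
Local Notation A := (Wpoly K).
Variables (l : nat) (r s : int).
Local Notation w := (weight l r s).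

Lemma vdeg_ge (P : A) u : u \in msupp P -> w u <= vdeg l r s P.
Proof. by move=> hu; apply: foldr_max_ge; apply/mapP; exists u. Qed.

Lemma vdeg_mem (P : A) : P != 0 -> exists2 u, u \in msupp P & w u = vdeg l r s P.
Proof.
move=> hP; rewrite /vdeg.
have hin : forall u, (u \in msupp P) = (u \in enum_fset (msupp P)) by [].
case E: (enum_fset (msupp P)) => [|a t].
  case/negP: hP; apply/eqP/malgP => x; rewrite mcoeff0.
  by apply: mcoeff_outdom; rewrite hin E.
have ha : a \in msupp P by rewrite hin E mem_head.
case: (foldr_max_mem (w (head (0%:Z, 0%N) (a :: t))) [seq w u | u <- a :: t]) => [->|].
  by exists a.
by case/mapP => u hu ->; exists u => //; rewrite hin E.
Qed.

Lemma sum_delta (P : A) (F : I -> K) x :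
  \sum_(u <- msupp P) F u *+ (u == x) = if x \in msupp P then F x else 0.
Proof.
case: ifP => hx.
  rewrite (big_fsetD1 x hx) /= eqxx mulr1n big1_fset ?addr0 // => u.
  by rewrite in_fsetD1 => /andP[ux _] _; rewrite (negbTE ux).
apply: big1_fset => u hu _; case: eqP => [e|_]; last by rewrite mulr0n.
by rewrite -e hu in hx.
Qed.

Lemma lead_coef (P : A) x :
  (lead l r s P)@_x = if w x == vdeg l r s P then P@_x else 0.
Proof.
rewrite /lead big_mkcond raddf_sum /=.
rewrite (eq_bigr (fun u => (if w u == vdeg l r s P then P@_u else 0) *+ (u == x))).
  rewrite sum_delta; case: ifP => // /negbT hx.
  by rewrite (mcoeff_outdom hx); case: ifP.
by move=> u _; case: ifP => _; [rewrite mcoeffU | rewrite mcoeff0 mul0rn].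
Qed.


Lemma nz_supp (P : A) : P != 0 -> exists x, x \in msupp P.
Proof.
move=> hP.
have hin : forall u, (u \in msupp P) = (u \in enum_fset (msupp P)) by [].
case E: (enum_fset (msupp P)) => [|a t].
  case/negP: hP; apply/eqP/malgP => x; rewrite mcoeff0.
  by apply: mcoeff_outdom; rewrite hin E.
by exists a; rewrite hin E mem_head.
Qed.

Lemma top_part (P H : A) c : allin (hom l r s c) H -> allin (sbnd l r s c) (P - H) ->
  H != 0 -> vdeg l r s P = c /\ lead l r s P = H.
Proof.
move=> hH hPH nH.
have cP : forall x, w x == c -> P@_x = H@_x.
  move=> x hx; apply/eqP; rewrite -subr_eq0 -mcoeffB; apply/eqP/mcoeff_outdom.
  by apply/negP => /hPH; rewrite /sbnd (eqP hx) ltxx.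
have cH : forall x, w x != c -> H@_x = 0.
  move=> x hx; apply: mcoeff_outdom; apply/negP => /hH; rewrite /hom (negbTE hx).
  by [].
have bP : forall x, x \in msupp P -> w x <= c.
  move=> x hx; case: (eqVneq (w x) c) => [->//|ne].
  have : x \in msupp (P - H).
    by rewrite -mcoeff_neq0 mcoeffB (cH _ ne) subr0 mcoeff_neq0.
  by move/hPH; rewrite /sbnd => /ltW.
have [x hx] := nz_supp nH.
have wx : w x == c := hH x hx.
have xP : x \in msupp P by rewrite -mcoeff_neq0 (cP _ wx) mcoeff_neq0.
have nP : P != 0 by apply/eqP => P0; rewrite P0 msupp0 in xP.
have vd : vdeg l r s P = c.
  apply/le_anti/andP; split; last by rewrite -(eqP wx); apply: vdeg_ge.
  by case: (vdeg_mem nP) => u hu <-; apply: bP.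
split => //; apply/malgP => y; rewrite lead_coef vd; case: ifP => hy.
  exact: cP.
by rewrite cH // hy.
Qed.

Lemma lead_hom (P : A) : allin (hom l r s (vdeg l r s P)) (lead l r s P).
Proof.
move=> x; rewrite -mcoeff_neq0 lead_coef; case: ifP => // _.
by rewrite eqxx.
Qed.

Lemma lead_nz (P : A) : P != 0 -> lead l r s P != 0.
Proof.
move=> /vdeg_mem [u hu wu]; apply/eqP => h.
move: hu; rewrite -mcoeff_neq0 => /eqP; apply.
by have := lead_coef P u; rewrite h mcoeff0 wu eqxx => <-.
Qed.

Lemma lead_rest (P : A) : allin (sbnd l r s (vdeg l r s P)) (P - lead l r s P).
Proof.
move=> x; rewrite -mcoeff_neq0 mcoeffB lead_coef; case: ifP => hx.
  by rewrite subrr eqxx.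
rewrite subr0 mcoeff_neq0 => /vdeg_ge; rewrite /sbnd lt_neqAle hx.
by [].
Qed.

End Lead.

Section LinMap.
Variable K : fieldType.
Local Notation A := (Wpoly K).

Definition islin (f : A -> A) := forall c P Q, f (c *: P + Q) = c *: f P + f Q.

Variable f : A -> A.
Hypothesis hf : islin f.

Lemma lin0 : f 0 = 0.
Proof.
have h := hf 1 0 0; rewrite !scale1r addr0 in h.
by apply: (@addrI _ (f 0)); rewrite addr0 -h.
Qed.

Lemma linD P Q : f (P + Q) = f P + f Q.
Proof. by have := hf 1 P Q; rewrite !scale1r. Qed.

Lemma linB P Q : f (P - Q) = f P - f Q.
Proof. by have := hf (-1) Q P; rewrite !scaleN1r addrC => ->; rewrite addrC. Qed.

Lemma lin_sum (J : Type) (r : seq J) (F : J -> A) :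
  f (\sum_(j <- r) F j) = \sum_(j <- r) f (F j).
Proof. exact: (big_morph f linD lin0). Qed.

Lemma monU (c : K) (u : I) : << c *g u >> = c *: mon K u.1 u.2.
Proof.
apply/malgP => x; rewrite mcoeffZ mcoeff_mon mcoeffU; case: u => a b /=.
by rewrite mulr_natr.
Qed.

Lemma lin_expand P : f P = lsum (fun u => f (mon K u.1 u.2)) P.
Proof.
rewrite {1}(monalgE P) lin_sum /lsum; apply: eq_bigr => u _.
have := hf P@_u (mon K u.1 u.2) 0; rewrite addr0 lin0 addr0 => <-.
by rewrite monU.
Qed.
End LinMap.

Section More.
Variable K : fieldType.
Local Notation A := (Wpoly K).

Lemma lsum_allin (Q : pred I) (F : I -> A) (P : A) :
  (forall u, u \in msupp P -> allin Q (F u)) -> allin Q (lsum F P).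
Proof.
move=> h; rewrite /lsum big_seq; apply: allin_sum => u hu; apply: allinZ.
exact: h.
Qed.

Lemma lsum_sub (F G : I -> A) (P : A) :
  lsum F P - lsum G P = lsum (fun u => F u - G u) P.
Proof.
rewrite /lsum -sumrB; apply: eq_bigr => u _; by rewrite scalerBr.
Qed.

Variable l : nat.

Lemma WmulE (P Q : A) :
  Wmul l P Q = lsum (fun u => lsum (fun v => Wmonmul K l u v) Q) P.
Proof.
rewrite /Wmul /lsum; apply: eq_bigr => u _; rewrite scaler_sumr.
by apply: eq_bigr => v _; rewrite scalerA.
Qed.

Lemma WmulBl (P1 P2 Q : A) : Wmul l (P1 - P2) Q = Wmul l P1 Q - Wmul l P2 Q.
Proof. by rewrite !WmulE lsumB. Qed.

Lemma WmulBr (P Q1 Q2 : A) : Wmul l P (Q1 - Q2) = Wmul l P Q1 - Wmul l P Q2.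
Proof.
rewrite !WmulE lsum_sub; apply: eq_bigr => u _.
by rewrite lsumB.
Qed.

Lemma Xpow (f : A -> A) (M : A -> A -> A)
  (hM : forall Q, M (mon K 1 0) Q = Lmul (mon K 1 0) Q)
  (fmul : forall P Q, f (M P Q) = M (f P) (f Q))
  (f1 : f (mon K 0 0) = mon K 0 0) (fX : f (mon K 1 0) = mon K 1 0) :
  forall i, f (mon K i 0) = mon K i 0.
Proof.
have step : forall i, M (mon K 1 0) (mon K i 0) = mon K (1 + i) 0.
  by move=> i; rewrite hM Lmul_mon addn0.
have pos : forall n : nat, f (mon K n%:Z 0) = mon K n%:Z 0.
  elim=> [|n IH] //.
  have e : n.+1%:Z = 1 + n%:Z by rewrite -[n.+1]add1n PoszD.
  by rewrite e -step fmul fX IH.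
have neg : forall n : nat, f (mon K (- n%:Z) 0) = mon K (- n%:Z) 0.
  elim=> [|n IH]; first by rewrite oppr0.
  have e : 1 - n.+1%:Z = - n%:Z.
    by rewrite -[n.+1]add1n PoszD opprD addrA subrr add0r.
  have h1 : Lmul (mon K 1 0) (f (mon K (- n.+1%:Z) 0)) = f (mon K (1 - n.+1%:Z) 0).
    by rewrite -step fmul fX hM.
  apply: (@Lmul_X_inj K); rewrite h1 e IH Lmul_mon addn0 e.
  by [].
by case=> n; [apply: pos | rewrite NegzE; apply: neg].
Qed.
End More.

Lemma cross_pos (r s r1 s1 : int) : 0 < r -> inV r s -> inV r1 s1 ->
  ltV r s r1 s1 -> 0 < r * s1 - s * r1.
Proof.
move=> hr /andP[g hrs] /andP[g1 hrs1] /andP[hle hne].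
move: hle; rewrite /leV => hle.
rewrite lt_neqAle hle andbT; apply: contraNneq hne => h0.
have e : r * s1 = s * r1 by apply/eqP; rewrite -subr_eq0 -h0.
have : (r %| r1)%Z.
  by rewrite -(@Gauss_dvdzr r s r1 g) -e; apply: dvdz_mulr; apply: dvdzz.
case/dvdzP => t ht.
have r0 : r != 0 by rewrite gt_eqF.
have hs1 : s1 = t * s.
  by apply: (mulfI r0); rewrite e ht; ring.
have ht0 : 0 < t.
  by move: hrs1; rewrite ht hs1 -mulrDr (pmulr_lgt0 _ hrs).
have ht1 : t = 1.
  move: g1; rewrite ht hs1 [t * r]mulrC [t * s]mulrC -mulz_gcdl (eqP g) mul1r.
  by rewrite gtz0_abs // => /eqP.
by rewrite ht hs1 ht1 !mul1r.
Qed.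

Lemma wS l (r s : int) (i : int) (j : nat) :
  weight l r s (i, j.+1) = weight l r s (i, j) + s%:~R.
Proof. by rewrite /weight /= -addn1 natrD; ring. Qed.

Lemma wY l (r s : int) : weight l r s (0, 1%N) = s%:~R.
Proof. by rewrite /weight /= mul0r mulr0 add0r mulr1. Qed.

Lemma wX l (r s rho sigma q : int) : (q%:~R : rat) * rho%:~R = l%:R ->
  (q%:~R : rat) != 0 -> (rho%:~R : rat) != 0 ->
  weight l r s (sigma * q, 0%N) = r%:~R * sigma%:~R / rho%:~R.
Proof.
move=> hq q0 r0; rewrite /weight /= mulr0 addr0 intrM -hq.
by field; rewrite q0 r0.
Qed.

Lemma zmod_id (V : zmodType) (x y z : V) : x - y = (x - z) + (z - y).
Proof. by rewrite addrA subrK. Qed.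

Lemma expand_id (K : fieldType) (P : Wpoly K) :
  P = lsum (fun u => mon K u.1 u.2) P.
Proof.
rewrite {1}(monalgE P) /lsum; apply: eq_bigr => u _; exact: monU.
Qed.

Unset Implicit Arguments.
Theorem proposition4p2
  (K : fieldType) (charK0 : [pchar K] =i pred0)
  (l : nat) (l_gt0 : (0 < l)%N)
  (rho sigma : int) (hV : inV rho sigma) (hsigma : sigma <= 0)
  (hdvd : (rho %| l%:Z)%Z) (lambda : K)
  (phi : Wpoly K -> Wpoly K)
  (phi_lin : forall (c : K) (P Q : Wpoly K), phi (c *: P + Q) = c *: phi P + phi Q)
  (phi_mul : forall P Q : Wpoly K, phi (Wmul l P Q) = Wmul l (phi P) (phi Q))
  (phi_one : phi (mon K 0 0) = mon K 0 0)
  (phi_bij : bijective phi)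
  (phi_X : phi (mon K 1 0) = mon K 1 0)
  (phi_Y : phi (mon K 0 1) = mon K 0 1 + lambda *: mon K (sigma * (l%:Z %/ rho)%Z) 0)
  (phiL : Wpoly K -> Wpoly K)
  (phiL_lin : forall (c : K) (P Q : Wpoly K), phiL (c *: P + Q) = c *: phiL P + phiL Q)
  (phiL_mul : forall P Q : Wpoly K, phiL (Lmul P Q) = Lmul (phiL P) (phiL Q))
  (phiL_one : phiL (mon K 0 0) = mon K 0 0)
  (phiL_bij : bijective phiL)
  (phiL_X : phiL (mon K 1 0) = mon K 1 0)
  (phiL_Y : phiL (mon K 0 1) = mon K 0 1 + lambda *: mon K (sigma * (l%:Z %/ rho)%Z) 0)
  (P : Wpoly K) (hP : P != 0) :
  [/\ lead l rho sigma (phi P) = phiL (lead l rho sigma P),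
      vdeg l rho sigma (phi P) = vdeg l rho sigma P
    & forall rho1 sigma1 : int, inV rho1 sigma1 -> ltV rho sigma rho1 sigma1 ->
        lead l rho1 sigma1 (phi P) = lead l rho1 sigma1 P].
Proof.
have [_ hrs] := andP hV.
have hr : 0 < rho by apply: (lt_le_trans hrs); rewrite gerDl.
move: phi_Y phiL_Y; set q := (l%:Z %/ rho)%Z => phi_Y phiL_Y.
have hq : q * rho = l%:Z := divzK hdvd.
have hqr : (q%:~R : rat) * rho%:~R = l%:R by rewrite -intrM hq -pmulrn.
have r0 : (rho%:~R : rat) != 0 by rewrite intr_eq0 gt_eqF.
have q0 : (q%:~R : rat) != 0.
  apply/eqP => h; move: hqr; rewrite h mul0r => /eqP; rewrite eq_sym pnatr_eq0.
  by move=> /eqP l0; move: l_gt0; rewrite l0.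
have rp : (0 : rat) < rho%:~R by rewrite ltr0z.
move: phi_Y phiL_Y; set Y := mon K 0 1 + lambda *: mon K (sigma * q) 0 => phi_Y phiL_Y.
have philin : islin phi := phi_lin.
have phiLlin : islin phiL := phiL_lin.
have phiX : forall i, phi (mon K i 0) = mon K i 0.
  exact: (Xpow (@Wmul_X K l) phi_mul phi_one phi_X).
have phiLX : forall i, phiL (mon K i 0) = mon K i 0.
  exact: (@Xpow K phiL (@Lmul K) (fun Q => erefl) phiL_mul phiL_one phiL_X).
have phiS : forall i j, phi (mon K i j.+1) = Wmul l (phi (mon K i j)) Y.
  by move=> i j; rewrite -phi_Y -phi_mul Wmul_mon Wmonmul_Y.
have phiLS : forall i j, phiL (mon K i j.+1) = Lmul (phiL (mon K i j)) Y.
  by move=> i j; rewrite -phiL_Y -phiL_mul Lmul_mon addr0 addn1.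
have wYh : allin (hom l rho sigma sigma%:~R) Y.
  apply: allinD; first by apply: allin_mon; rewrite /hom wY.
  apply: allinZ; apply: allin_mon; rewrite /hom (wX _ _ _ hqr q0 r0).
  by rewrite mulrAC divff // mul1r.
have homb : forall r s c (Q : Wpoly K), allin (hom l r s c) Q -> allin (bnd l r s c) Q.
  by move=> r s c Q; apply: allin_imp => x; rewrite /hom /bnd => /eqP ->.
have sbndb : forall r s c (Q : Wpoly K), allin (sbnd l r s c) Q -> allin (bnd l r s c) Q.
  by move=> r s c Q; apply: allin_imp => x; rewrite /sbnd /bnd => /ltW.
have hA : forall i j, allin (hom l rho sigma (weight l rho sigma (i, j))) (phiL (mon K i j)).
  move=> i; elim=> [|j IH]; first by rewrite phiLX; apply: allin_mon; rewrite /hom.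
  by rewrite phiLS wS; apply: L_hom.
have hB : forall i j, allin (sbnd l rho sigma (weight l rho sigma (i, j)))
                        (phi (mon K i j) - phiL (mon K i j)).
  move=> i; elim=> [|j IH]; first by rewrite phiX phiLX subrr; apply: allin0.
  rewrite phiS phiLS wS (zmod_id _ _ (Wmul l (phiL (mon K i j)) Y)) -WmulBl.
  apply: allinD; first by apply: (W_sbndl l_gt0 hrs) => //; apply: homb.
  by apply: (WL_sbnd l_gt0 hrs); apply: homb.
have hbnd : forall i j, allin (bnd l rho sigma (weight l rho sigma (i, j))) (phi (mon K i j)).
  move=> i j; rewrite -[phi _](subrK (phiL (mon K i j))).
  by apply: allinD; [apply: sbndb; apply: hB | apply: homb; apply: hA].
set v := vdeg l rho sigma P.
set H := lead l rho sigma P.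
have hHh : allin (hom l rho sigma v) H := @lead_hom _ l rho sigma P.
have hHr : allin (sbnd l rho sigma v) (P - H) := @lead_rest _ l rho sigma P.
have hHnz : H != 0 := lead_nz l rho sigma hP.
have top1 : allin (hom l rho sigma v) (phiL H).
  rewrite (lin_expand phiLlin); apply: lsum_allin => -[a b] hu /=.
  by move: (hHh _ hu); rewrite /hom => /eqP <-; apply: hA.
have low1 : allin (sbnd l rho sigma v) (phi P - phiL H).
  rewrite (zmod_id _ _ (phi H)) -(linB philin).
  apply: allinD.
    rewrite (lin_expand philin); apply: lsum_allin => -[a b] hu /=.
    move: (hHr _ hu); rewrite /sbnd => hlt.
    by apply: allin_imp (hbnd a b) => x; rewrite /bnd /sbnd => /le_lt_trans; apply.
  rewrite (lin_expand philin) (lin_expand phiLlin) lsum_sub.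
  apply: lsum_allin => -[a b] hu /=.
  by move: (hHh _ hu); rewrite /hom => /eqP <-; apply: hB.
have nz1 : phiL H != 0.
  apply/eqP => h; move/eqP: hHnz; apply.
  by apply: (bij_inj phiL_bij); rewrite h (lin0 phiLlin).
have [vd ld] := top_part top1 low1 nz1.
split => //.
move=> r1 s1 hV1 hlt.
have [_ hrs1] := andP hV1.
have cross := cross_pos hr hV hV1 hlt.
have strict : weight l r1 s1 (sigma * q, 0%N) < s1%:~R.
  rewrite (wX _ _ _ hqr q0 r0) ltr_pdivrMr // -!intrM ltr_int.
  by rewrite -subr_gt0 [s1 * rho]mulrC [r1 * sigma]mulrC.
have hY1 : allin (bnd l r1 s1 s1%:~R) Y.
  apply: allinD; first by apply: allin_mon; rewrite /bnd wY.
  by apply: allinZ; apply: allin_mon; rewrite /bnd ltW.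
have hC : forall i j, allin (sbnd l r1 s1 (weight l r1 s1 (i, j)))
                        (phi (mon K i j) - mon K i j).
  move=> i; elim=> [|j IH]; first by rewrite phiX subrr; apply: allin0.
  have eY : lambda *: mon K (sigma * q) 0 = Y - mon K 0 1.
    by rewrite /Y [mon K 0 1 + _]addrC addrK.
  rewrite phiS wS -(Wmonmul_Y K l i j) -Wmul_mon (zmod_id _ _ (Wmul l (mon K i j) Y)).
  rewrite -WmulBl -WmulBr -eY.
  apply: allinD; first by apply: (W_sbndl l_gt0 hrs1).
  apply: (W_sbndr l_gt0 hrs1); first by apply: allin_mon; rewrite /bnd.
  by apply: allinZ; apply: allin_mon; rewrite /sbnd.
set H1 := lead l r1 s1 P.
have low3 : allin (sbnd l r1 s1 (vdeg l r1 s1 P)) (phi P - H1).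
  rewrite (zmod_id _ _ P); apply: allinD; last exact: lead_rest.
  have e : phi P - P = lsum (fun u => phi (mon K u.1 u.2) - mon K u.1 u.2) P.
    by rewrite -lsum_sub -(lin_expand philin) -expand_id.
  rewrite e; apply: lsum_allin => -[a b] hu /=.
  apply: allin_imp (hC a b) => x; rewrite /sbnd => /lt_le_trans; apply.
  exact: vdeg_ge.
have [_ ->] := top_part (@lead_hom _ l r1 s1 P) low3 (lead_nz l r1 s1 hP).
by [].
Qed.
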